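(* Let $n\ge1$ have canonical prime factorization $n=p_1^{\alpha_1}p_2^{\alpha_2}\cdots p_r^{\alpha_r}$, and let $d_1,\dots,d_{\tau(n)}$ be the positive divisors of $n$ (listed in any order). Then $$\det\Big[c_{d_i}\Big(\frac{n}{d_j}\Big)\Big]_{i,j=1}^{\tau(n)} = n^{\tau(n)/2}\,(-1)^{\sum_{i=1}^r \lfloor\frac{\alpha_i+1}{2}\rfloor\frac{\tau(n)}{\alpha_i+1}}.$$
   Context: For integers $m\ge1$ and $x$, the Ramanujan sum is $c_m(x)=\sum_{1\le j\le m,\ (j,m)=1} e^{2\pi i jx/m}$. $\tau(n)$ denotes the number of positive divisors of $n$. *)

(* Defs.v *)
From HB Require Import structures.
From mathcomp Require Import all_boot all_order all_algebra.
From mathcomp Require Import reals exp trigo.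
From mathcomp Require Import complex.
Set Implicit Arguments. Unset Strict Implicit. Unset Printing Implicit Defensive.
Import Order.TTheory GRing.Theory Num.Theory.
Local Open Scope ring_scope.

Definition expi2pi (R : realType) (t : R) : R[i] :=
  (cos (2 * pi * t) +i* sin (2 * pi * t))%C.

Definition ramanujan_sum (R : realType) (m : nat) (x : int) : R[i] :=
  \sum_(1 <= j < m.+1 | coprime j m) expi2pi ((j%:R * x%:~R) / m%:R : R).

Definition tau (n : nat) : nat := size (divisors n).

(* Main.v *)
Require Import Defs.
From HB Require Import structures.
From mathcomp Require Import all_boot all_order all_algebra perm.
From mathcomp Require Import reals exp trigo.
From mathcomp Require Import complex.
From mathcomp Require Import ring lra zify.
Import Order.TTheory GRing.Theory Num.Theory.
Lemma divDK m d : (0 < m)%N -> (d %| m)%N -> m %/ (m %/ d) = d.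
Proof. by move=> m0 dv; rewrite divnA // mulKn // (dvdn_gt0 m0 dv). Qed.

Lemma divisors_rev_perm m : (0 < m)%N ->
  perm_eq [seq m %/ d | d <- divisors m] (divisors m).
Proof.
move=> m0; apply: uniq_perm; last first.
- move=> y; apply/mapP/idP.
    by case=> d; rewrite -!dvdn_divisors // => dv ->; apply: dvdn_div.
  rewrite -dvdn_divisors // => dv; exists (m %/ y); first by rewrite -dvdn_divisors // dvdn_div.
  by rewrite divDK.
- exact: divisors_uniq.
rewrite map_inj_in_uniq ?divisors_uniq // => a b; rewrite -!dvdn_divisors // => da db Hab.
by rewrite -(@divDK m a m0 da) Hab divDK.
Qed.

Lemma gcd_class_perm m e0 : (0 < m)%N -> (e0 %| m)%N ->
  perm_eq [seq j <- index_iota 1 m.+1 | gcdn j m == e0]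
          [seq j' * e0 | j' <- [seq j' <- index_iota 1 (m %/ e0).+1 | coprime j' (m %/ e0)]].
Proof.
move=> m0 dv; set d := m %/ e0.
have e0p : (0 < e0)%N := dvdn_gt0 m0 dv.
have md : m = d * e0 by rewrite /d divnK.
apply: uniq_perm.
- by rewrite filter_uniq // iota_uniq.
- rewrite map_inj_uniq ?filter_uniq ?iota_uniq //.
  by move=> a b /eqP; rewrite eqn_pmul2r // => /eqP.
move=> j; rewrite mem_filter /index_iota subn1 /= mem_iota.
apply/andP/mapP.
- case=> /eqP g /andP[j1 jm].
  have dj : (e0 %| j)%N by rewrite -g dvdn_gcdl.
  exists (j %/ e0); last by rewrite divnK.
  rewrite mem_filter /index_iota subn1 /= mem_iota.
  have Hj : j = (j %/ e0) * e0 by rewrite divnK.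
  rewrite /coprime; apply/andP; split.
    apply/eqP; move: g; rewrite {1}Hj {1}md -muln_gcdl.
    by move=> /eqP; rewrite -[X in _ == X]mul1n eqn_pmul2r // => /eqP.
  rewrite add1n ltnS; apply/andP; split.
    by rewrite divn_gt0 // dvdn_leq.
  by rewrite leq_div2r // -ltnS -[m.+1]add1n.
- case=> j' + ->; rewrite mem_filter /index_iota subn1 /= mem_iota => /andP[cp /andP[j1 jd]].
  rewrite md -muln_gcdl (eqP cp) mul1n eqxx; split => //.
  rewrite muln_gt0 j1 e0p /= add1n ltnS leq_mul2r.
  by rewrite -ltnS -[d.+1]add1n jd orbT.
Qed.
Lemma rev_divisors n : 0 < n -> rev (divisors n) = [seq n %/ d | d <- divisors n].
Proof.
move=> n0; apply: (@irr_sorted_eq _ (fun x y => y < x)).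
- by move=> x y z /= h1 h2; exact: ltn_trans h2 h1.
- by move=> x /=; rewrite ltnn.
- by rewrite rev_sorted; exact: sorted_divisors_ltn.
- rewrite sorted_map; apply: (@sub_in_sorted _ (mem (divisors n)) ltn); last first.
  + exact: sorted_divisors_ltn.
  + by apply/allP.
  + move=> a b; rewrite /= -!dvdn_divisors // => da db ab.
    have := divnK da; have := divnK db; have := dvdn_gt0 n0 da.
    have : 0 < n %/ b by rewrite divn_gt0 ?(dvdn_gt0 n0 db) //; apply: dvdn_leq.
    move: (n %/ a) (n %/ b) => u v v0 _ Hb Ha.
    rewrite ltnNge; apply/negP => uv.
    have h1 : u * a <= v * a := leq_mul uv (leqnn a).
    have h2 : v * a < v * b by rewrite ltn_pmul2l.
    by move: (leq_ltn_trans h1 h2); rewrite Ha Hb ltnn.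
- by move=> x; rewrite mem_rev (perm_mem (@divisors_rev_perm n n0)).
Qed.

Lemma size_add_divisors f divs : size (PrimeDecompAux.add_divisors f divs) = f.2.+1 * size divs.
Proof.
case: f => p e /=; elim: e => [|e IH] /=; first by rewrite mul1n.
by rewrite size_merge size_cat size_map IH mulSn addnC.
Qed.

Lemma tau_prod n : size (divisors n) = \prod_(p <- primes n) (logn p n).+1.
Proof.
rewrite /divisors prime_decompE.
elim: (primes n) => [|p ps IH]; first by rewrite big_nil.
rewrite map_cons big_cons -IH.
exact: (size_add_divisors (p, logn p n)).
Qed.

Lemma half_mul a b : odd ((a * b)./2) = odd (a./2 * b + a * b./2).
Proof.
move: (odd_double_half a) (odd_double_half b).
move: (odd a) (a./2) (odd b) (b./2) => r q r' q' <- <-.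
have -> : (r + q.*2) * (r' + q'.*2) = (r && r') + (2 * q * q' + q * r' + q' * r).*2.
  rewrite -!muln2; case: r; case: r' => /=; ring.
rewrite half_bit_double -!muln2 !oddD !oddM /=.
rewrite !oddD !oddM /= !andbF !addbF.
by case: r; case: r'; case: (odd q); case: (odd q').
Qed.

Lemma parity_list (l : seq nat) : all (fun x => 0 < x) l ->
  odd ((\prod_(x <- l) x)./2) = odd (\sum_(x <- l) x./2 * (\prod_(y <- l) y %/ x)).
Proof.
elim: l => [|a l IH] /=; first by rewrite !big_nil.
move=> /andP[a0 hl].
rewrite !big_cons mulKn // half_mul !oddD [odd (a * _)]oddM IH //.
congr (_ (+) _).
have -> : \sum_(j <- l) j./2 * ((a * \prod_(j0 <- l) j0) %/ j) =
          a * \sum_(j <- l) j./2 * ((\prod_(j0 <- l) j0) %/ j).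
  rewrite big_distrr /= big_seq [RHS]big_seq; apply: eq_bigr => x xl.
  rewrite -muln_divA; first by rewrite mulnCA.
  by rewrite (big_rem x) //= dvdn_mulr.
by rewrite oddM.
Qed.

Definition revp k : 'S_k := perm (@rev_ord_inj k).
Lemma odd_revp k : odd_perm (revp k) = odd k./2.
Proof.
elim: k => [|k IH].
  have -> : revp 0 = 1%g by apply/permP => -[].
  by rewrite odd_perm1.
have -> : revp k.+1 = lift_perm ord0 ord_max (revp k).
  apply/permP => i; case: (unliftP ord0 i) => [j|] ->.
    rewrite lift_perm_lift; apply: val_inj; rewrite /revp !permE /= /bump /=.
    have jk := ltn_ord j.
    rewrite (_ : (k <= k - j.+1) = false) /=; first lia.
    apply/negbTE; rewrite -ltnNge; lia.
  by rewrite lift_perm_id; apply: val_inj; rewrite /revp permE /= subn1.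
rewrite odd_lift_perm IH /= uphalf_half oddD.
by case: (odd k); case: (odd k./2).
Qed.

Local Open Scope ring_scope.
Section S.
Variable R : realType.
Local Notation e := (@expi2pi R).
Lemma eD a b : e (a + b) = e a * e b.
Proof.
rewrite /expi2pi mulrDr cosD sinD.
by apply/eqP; rewrite eq_complex /=; apply/andP; split; apply/eqP; ring.
Qed.
Lemma e_nat (k : nat) : e k%:R = 1.
Proof.
rewrite /expi2pi. have -> : 2 * pi * k%:R = 0 + (pi *+ 2) *+ k :> R by rewrite add0r mulr_natr mulr2n mulrDl !mul1r.
by rewrite (periodicn (@cosD2pi R)) (periodicn (@sinD2pi R)) cos0 sin0.
Qed.
Lemma e0 : e 0 = 1.
Proof. by have := e_nat 0; rewrite mulr0n. Qed.
Lemma eMn t k : e (t *+ k) = e t ^+ k.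
Proof. by elim: k => [|k IH]; rewrite ?mulr0n ?e0 // mulrS eD IH exprS. Qed.
Lemma e_neq1 (r m : nat) : (0 < r < m)%N -> e (r%:R / m%:R) != 1.
Proof.
move=> /andP[r0 rm]; apply/negP => /eqP H.
have : cos (2 * pi * (r%:R / m%:R)) = 1 :> R by move: H => [].
set th : R := pi * (r%:R / m%:R).
have -> : 2 * pi * (r%:R / m%:R) = th *+ 2 :> R by rewrite /th mulr2n -mulrA; ring.
rewrite cos_mulr2n => Hc.
have Hc2 : cos th ^+ 2 = 1 :> R.
  by move: Hc; rewrite mulr2n => /(congr1 (fun z => (z + 1) / 2)) /=; move=> Hz; lra.
have Hs : sin th ^+ 2 = 0 :> R by rewrite sin2cos2 Hc2 subrr.
have : 0 < sin th.
  apply: sin_gt0_pi; rewrite /th; apply/andP; split.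
    by apply: mulr_gt0; [exact: pi_gt0| apply: divr_gt0; rewrite ltr0n // (ltn_trans r0 rm)].
  have hm : 0 < m%:R :> R by rewrite ltr0n (ltn_trans r0 rm).
  rewrite -[X in _ < X]mulr1 ltr_pM2l; last exact: pi_gt0.
  by rewrite ltr_pdivrMr // mul1r ltr_nat.
by move: Hs => /eqP; rewrite sqrf_eq0 => /eqP ->; rewrite ltxx.
Qed.
Lemma Gsum (m x : nat) : (0 < m)%N ->
  \sum_(1 <= j < m.+1) e (j%:R * x%:R / m%:R) = if (m %| x)%N then m%:R else 0.
Proof.
move=> m0.
have hm : m%:R != 0 :> R by rewrite pnatr_eq0 -lt0n.
set z := e ((x %% m)%:R / m%:R).
have Ez : forall j, e (j%:R * x%:R / m%:R) = z ^+ j.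
  move=> j.
  have -> : j%:R * x%:R / m%:R = ((x %% m)%:R / m%:R) *+ j + (j * (x %/ m))%:R :> R.
    rewrite {1}(divn_eq x m) natrD !natrM -mulr_natl; field; exact: hm.
  by rewrite eD e_nat mulr1 eMn.
under eq_bigr => j _ do rewrite Ez.
case: ifP => dv.
  rewrite /z (eqP dv) mul0r e0.
  under eq_bigr => j _ do rewrite expr1n.
  by rewrite sumr_const_nat subn1.
have r0 : (0 < x %% m)%N by rewrite lt0n -/(dvdn m x) dv.
have zn1 : z != 1 by apply: e_neq1; rewrite r0 ltn_pmod.
have zm : z ^+ m = 1.
  rewrite /z -eMn; have -> : ((x %% m)%:R / m%:R) *+ m = (x %% m)%:R :> R.
    by rewrite -mulr_natr mulfVK.
  exact: e_nat.
rewrite big_add1 /= big_mkord.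
under eq_bigr => i _ do rewrite exprS.
rewrite -mulr_sumr.
have : (z - 1) * \sum_(i < m) z ^+ i = 0 by rewrite -subrX1 zm subrr.
by move/eqP; rewrite mulf_eq0 subr_eq0 (negbTE zn1) /= => /eqP ->; rewrite mulr0.
Qed.
Lemma partition_sum (F : nat -> R[i]) (r D : seq nat) (p : nat -> nat) :
  uniq D -> (forall j, j \in r -> p j \in D) ->
  \sum_(j <- r) F j = \sum_(d <- D) \sum_(j <- r | p j == d) F j.
Proof.
move=> uD hr.
under [RHS]eq_bigr => d _ do rewrite big_mkcond.
rewrite exchange_big /= big_seq [RHS]big_seq; apply: eq_bigr => j jr.
rewrite (bigD1_seq (p j)) ?hr //= eqxx big1 ?addr0 // => d.
by rewrite eq_sym => /negbTE ->.
Qed.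
Lemma rsE d x : ramanujan_sum R d x%:Z =
  \sum_(1 <= j < d.+1 | coprime j d) e (j%:R * x%:R / d%:R).
Proof. by rewrite /ramanujan_sum; under eq_bigr => j _ do rewrite -pmulrn. Qed.
Lemma sum_rs (m x : nat) : (0 < m)%N ->
  \sum_(d <- divisors m) ramanujan_sum R d x%:Z = \sum_(1 <= j < m.+1) e (j%:R * x%:R / m%:R).
Proof.
move=> m0.
rewrite [RHS](@partition_sum _ _ _ (fun j => gcdn j m) (divisors_uniq m)); last first.
  by move=> j _; rewrite -dvdn_divisors // dvdn_gcdr.
rewrite -[LHS](perm_big _ (@divisors_rev_perm m m0)) big_map big_seq [RHS]big_seq.
apply: eq_bigr => e0; rewrite -dvdn_divisors // => dv.
have e0p : (0 < e0)%N := dvdn_gt0 m0 dv.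
rewrite -big_filter (perm_big _ (@gcd_class_perm m e0 m0 dv)) big_map rsE big_filter.
apply: eq_bigr => j _; congr e.
have he : e0%:R != 0 :> R by rewrite pnatr_eq0 -lt0n.
have hd : (m %/ e0)%:R != 0 :> R by rewrite pnatr_eq0 -lt0n divn_gt0 // dvdn_leq.
rewrite -[in RHS](divnK dv) !natrM; field.
by rewrite he hd.
Qed.
End S.

Local Close Scope ring_scope.

Lemma filter_divisors n m : 0 < n -> m %| n ->
  [seq d <- divisors n | d %| m] = divisors m.
Proof.
move=> n0 mn; have m0 := dvdn_gt0 n0 mn.
apply: (@irr_sorted_eq _ ltn); [exact: ltn_trans| exact: ltnn| | |].
- exact/sorted_filter/sorted_divisors_ltn/ltn_trans.
- exact: sorted_divisors_ltn.
move=> d; rewrite mem_filter -!dvdn_divisors //.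
by apply/andP/idP => [[]//|dm]; split=> //; exact: dvdn_trans dm mn.
Qed.

Lemma prod_div_sq n : 0 < n ->
  (\prod_(d <- divisors n) d) * (\prod_(d <- divisors n) d) = n ^ size (divisors n).
Proof.
move=> n0.
rewrite -{2}(perm_big _ (@divisors_rev_perm n n0)) big_map -big_split /=.
rewrite big_seq (eq_bigr (fun _ => n)); last first.
  by move=> d; rewrite -dvdn_divisors // => dv; rewrite mulnC divnK.
by rewrite -big_seq big_const_seq count_predT iter_muln_1.
Qed.

Local Open Scope ring_scope.
Section M.
Variable R : realType.
Local Notation e := (@expi2pi R).

Lemma sum_rs_val (m x : nat) : (0 < m)%N ->
  \sum_(d <- divisors m) ramanujan_sum R d x%:Z = if (m %| x)%N then m%:R else 0.
Proof. by move=> m0; rewrite sum_rs // Gsum. Qed.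


Lemma det_sorted n : (0 < n)%N ->
  \det (\matrix_(i < size (divisors n), j < size (divisors n))
          ramanujan_sum R (nth 0%N (divisors n) i) ((n %/ nth 0%N (divisors n) j)%N)%:Z)
  = (\prod_(d <- divisors n) d)%:R * (-1) ^+ (revp (size (divisors n))).
Proof.
move=> n0.
set t := divisors n; set k := size t.
pose a (i : 'I_k) := nth 0%N t i.
have aT i : a i \in t by rewrite mem_nth.
have adv i : (a i %| n)%N by rewrite dvdn_divisors.
have apos i : (0 < a i)%N := dvdn_gt0 n0 (adv i).
have alt (i j : 'I_k) : (i < j)%N -> (a i < a j)%N.
  by move=> ij; apply: (sorted_ltn_nth ltn_trans 0%N (sorted_divisors_ltn n)); rewrite ?inE.
have arev i : a (rev_ord i) = (n %/ a i)%N.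
  rewrite /a /= -nth_rev // /t rev_divisors // (nth_map 0%N) //.
pose Z : 'M[R[i]]_k := \matrix_(i, j) ((a j %| a i)%N)%:R.
pose B : 'M[R[i]]_k := \matrix_(i, j) ((a i %| n %/ a j)%N)%:R.
pose Dg : 'M[R[i]]_k := diag_mx (\row_i ((a i)%:R : R[i])).
set C := \matrix_(i, j) _.
have E1 : Z *m C = Dg *m B.
  apply/matrixP => i j; rewrite mul_diag_mx !mxE.
  under eq_bigr => l _ do rewrite !mxE.
  pose G d := ((d %| a i)%N)%:R * ramanujan_sum R d (n %/ a j)%N%:Z.
  have -> : \sum_(l < k) ((a l %| a i)%N)%:R * ramanujan_sum R (nth 0%N t l) (n %/ nth 0%N t j)%N%:Z
           = \sum_(d <- t) G d by rewrite (big_nth 0%N) big_mkord.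
  have -> : \sum_(d <- t) G d = \sum_(d <- t | (d %| a i)%N) ramanujan_sum R d (n %/ a j)%N%:Z.
    rewrite [RHS]big_mkcond; apply: eq_bigr => d _; rewrite /G.
    by case: ifP => _; rewrite ?mul1r ?mul0r.
  rewrite -big_filter filter_divisors // sum_rs_val //.
  by case: ifP; rewrite ?mulr1 ?mulr0.
have E2 : \det Z = 1.
  rewrite det_trig; last first.
    apply/is_trig_mxP => i j ij; rewrite mxE.
    suff -> : (a j %| a i)%N = false by [].
    apply/negbTE/negP => /(dvdn_leq (apos i)); rewrite leqNgt (alt _ _ ij).
    by [].
  by rewrite big1 // => i _; rewrite mxE dvdnn.
have E3 : B = row_perm (revp k) Z.
  apply/matrixP => i j; rewrite !mxE /revp permE arev.
  by rewrite !dvdn_divRL // mulnC.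
have E4 : \det Dg = (\prod_(d <- t) d)%:R.
  rewrite det_diag natr_prod (big_nth 0%N) big_mkord.
  by apply: eq_bigr => i _; rewrite mxE.
have := congr1 determinant E1.
rewrite !det_mulmx E2 mul1r E3 row_permE det_mulmx det_perm E2 mulr1 E4 => ->.
by rewrite mulrC.
Qed.

Lemma det_perm_eq (F : nat -> nat -> R[i]) (s t : seq nat) (k : nat) :
  size s = k -> size t = k -> perm_eq s t ->
  \det (\matrix_(i < k, j < k) F (nth 0%N s i) (nth 0%N s j))
  = \det (\matrix_(i < k, j < k) F (nth 0%N t i) (nth 0%N t j)).
Proof.
move=> hs ht hp.
have hs' : size s == k by apply/eqP.
have ht' : size t == k by apply/eqP.
pose S : k.-tuple nat := Tuple hs'.
pose T : k.-tuple nat := Tuple ht'.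
have : perm_eq S T by [].
case/tuple_permP => p Ep.
have Es (i : 'I_k) : nth 0%N s i = nth 0%N t (p i).
  have Ep2 : S = [tuple tnth T (p i) | i < k] := val_inj Ep.
  by have := congr1 (fun u => tnth u i) Ep2; rewrite tnth_mktuple !(tnth_nth 0%N).
set M := \matrix_(i < k, j < k) F (nth 0%N t i) (nth 0%N t j).
have -> : \matrix_(i < k, j < k) F (nth 0%N s i) (nth 0%N s j) = col_perm p (row_perm p M).
  by apply/matrixP => i j; rewrite !mxE !Es.
rewrite col_permE row_permE !det_mulmx !det_perm odd_permV mulrC mulrA.
by rewrite -expr2 sqrr_sign mul1r.
Qed.

Lemma det_sorted' n k : (0 < n)%N -> size (divisors n) = k ->
  \det (\matrix_(i < k, j < k)
          ramanujan_sum R (nth 0%N (divisors n) i) ((n %/ nth 0%N (divisors n) j)%N)%:Z)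
  = (\prod_(d <- divisors n) d)%:R * (-1) ^+ (revp k).
Proof. by move=> n0 hk; subst k; exact: det_sorted. Qed.

Lemma prod_sqrt n : (0 < n)%N ->
  ((\prod_(d <- divisors n) d)%:R : R) = Num.sqrt (n%:R : R) ^+ size (divisors n).
Proof.
move=> n0; apply/eqP; rewrite -(@eqrXn2 _ 2) ?ler0n ?exprn_ge0 ?sqrtr_ge0 //.
rewrite exprAC sqr_sqrtr ?ler0n // expr2 -natrM prod_div_sq //.
by rewrite natrX.
Qed.
End M.

Theorem mainTheorem2 (R : realType) (n : nat) (s : seq nat) :
  (0 < n)%N -> perm_eq s (divisors n) ->
  \det (\matrix_(i < size s, j < size s)
          ramanujan_sum R (nth 0%N s i) ((n %/ nth 0%N s j)%N)%:Z)
  = (((Num.sqrt (n%:R : R)) ^+ tau n)%:C)%C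
    * (-1) ^+ (\sum_(p <- primes n) ((logn p n).+1./2 * (tau n %/ (logn p n).+1)))%N.
Proof.
move=> n0 hp.
have hsz := perm_size hp.
rewrite (@det_perm_eq R (fun a b => ramanujan_sum R a (n %/ b)%N%:Z) s (divisors n) (size s) erefl (esym hsz) hp).
rewrite (@det_sorted' R n (size s)) // /tau -prod_sqrt // -(rmorph_nat (real_complex R)).
congr (_ * _).
have H := @parity_list [seq (logn p n).+1 | p <- primes n].
rewrite !(big_map (fun p => (logn p n).+1)) -tau_prod in H.
rewrite -signr_odd odd_revp -[in RHS]signr_odd hsz -H /tau //.
  by rewrite oddb.
by apply/allP => x /mapP[p _ ->].
Qed.
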